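(* Let $A=k_{-1}[x_1,\dots,x_n]$ (i.e. $p_{ij}=-1$ for all $i\neq j$), and let $G$ be a finite subgroup of $\mathrm{Aut}(A)$ generated by quasi-reflections such that $[n]$ is a circle for $G$ and $\tau_{i,j,1}\in G$ for all $i\ne j$. Define $\Theta_i=\{\lambda\in k^\times:\theta_{i,\lambda}\in G\}$, $T_{i,j}=\{\lambda\in k^\times:\tau_{i,j,\lambda}\in G\}$, $S_{i,j}=\{\lambda\in k^\times: s_{i,j,\lambda}\in G\}$. Then: (a) $\Theta_i=\Theta_j$ for all $i,j$, and $\Theta_i$ is a cyclic group of some order $\alpha$; (b) $S_{i,j}=S_{i',j'}$ for all pairs $i\ne j$, $i'\ne j'$, and $S_{i,j}$ is cyclic of some even order $\beta$; (c) $T_{i,j}=T_{i',j'}=S_{i,j}$ for all such pairs; (d) $\alpha$ divides $\beta$.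
   Context: $k$ is algebraically closed of characteristic zero, $n\ge2$, $[n]=\{1,\dots,n\}$. $A=k_{-1}[x_1,\dots,x_n]$ is the graded $k$-algebra generated by $x_1,\dots,x_n$ (degree 1) with $x_jx_i=-x_ix_j$ for $i\ne j$. $\mathrm{Aut}(A)$: graded algebra automorphisms; $g$ is a quasi-reflection if $\sum_i\mathrm{tr}(g|_{A_i})t^i=\frac1{(1-t)^{n-1}(1-\lambda t)}$ with $\lambda\ne1$. For $s\in[n]$, $\lambda\in k^\times$: $\theta_{s,\lambda}(x_s)=\lambda x_s$, $\theta_{s,\lambda}(x_i)=x_i$ ($i\ne s$). For $s\ne t$, $\lambda\in k^\times$: $\tau_{s,t,\lambda}(x_s)=\lambda x_t$, $\tau_{s,t,\lambda}(x_t)=-\lambda^{-1}x_s$, $\tau_{s,t,\lambda}(x_i)=x_i$ otherwise; $s_{s,t,\lambda}(x_s)=\lambda x_s$, $s_{s,t,\lambda}(x_t)=\lambda^{-1}x_t$, $s_{s,t,\lambda}(x_i)=x_i$ otherwise. $[n]$ is a circle for $G$ if for each pair of distinct $i,j$ there are $\tau_{i_s,j_s,\lambda_s}\in G$, $s=0,\dots,t$, with $i_0=i$, $i_{s+1}=j_s$, $j_t=j$. *)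

(* Defs.v *)
From HB Require Import structures.
From mathcomp Require Import all_boot all_order all_algebra.
Set Implicit Arguments. Unset Strict Implicit. Unset Printing Implicit Defensive.
Import Order.TTheory GRing.Theory Num.Theory.
Local Open Scope ring_scope.

(* A graded endomorphism g of A is
   determined by its degree-1 part, encoded as a matrix M with
   g(x_j) = \sum_i M i j x_i  (column convention; composition = *m).       *)

Section Defs.
Variable R : fieldType.
Variable n : nat.

(* ordered monomials of degree d : x_{c_1} ... x_{c_d}, c_1 <= ... <= c_d;
   they form the standard basis of A_d *)
Definition mon (d : nat) := {c : d.-tuple 'I_n | sorted (fun a b : 'I_n => (a <= b)%N) c}.

(* number of inversions of a word; x_{w_1}...x_{w_d} = (-1)^inv w x_{sort w} *)
Definition inv_word (d : nat) (w : d.-tuple 'I_n) : nat :=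
  \sum_(p < d) \sum_(q < d) ((p < q)%N && (tnth w q < tnth w p)%N).

(* coefficient of the ordered monomial x_c in  g(x_{u_1}) ... g(x_{u_d}) *)
Definition prod_coef (M : 'M[R]_n) (d : nat) (c : mon d) (u : d.-tuple 'I_n) : R :=
  \sum_(w : d.-tuple 'I_n | sort (fun a b : 'I_n => (a <= b)%N) w == val c)
     (-1) ^+ inv_word w * \prod_(k < d) M (tnth w k) (tnth u k).

(* M defines a graded algebra endomorphism of A: the defining relations
   x_i x_j + x_j x_i (i != j) are sent to 0 in A_2 *)
Definition preserves_rel (M : 'M[R]_n) : Prop :=
  forall i j : 'I_n, i != j -> forall c : mon 2,
    prod_coef M c [tuple i; j] + prod_coef M c [tuple j; i] = 0.

Definition is_graut (M : 'M[R]_n) : Prop := M \in unitmx /\ preserves_rel M.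

Definition trace_deg (M : 'M[R]_n) (d : nat) : R :=
  \sum_(m : mon d) prod_coef M m (val m).

(* g is a quasi-reflection: its trace series equals
   1/((1-t)^(n-1)(1-lambda t)) with lambda != 1, written coefficientwise:
   the coefficient of t^d of the right side is
   \sum_{j=0}^d lambda^j * binom(d-j+n-2, n-2). *)
Definition quasi_reflection (M : 'M[R]_n) : Prop :=
  exists lam : R, lam != 1 /\
    forall d : nat, trace_deg M d =
      \sum_(j < d.+1) lam ^+ j * ('C((d - j) + (n - 2), n - 2))%:R.

Definition theta (s : 'I_n) (lam : R) : 'M[R]_n :=
  \matrix_(a, b) (if a == b then (if a == s then lam else 1) else 0).

Definition tau (s t : 'I_n) (lam : R) : 'M[R]_n :=
  \matrix_(a, b)
    (if b == s then (if a == t then lam else 0)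
     else if b == t then (if a == s then - lam^-1 else 0)
     else (a == b)%:R).

Definition sdiag (s t : 'I_n) (lam : R) : 'M[R]_n :=
  \matrix_(a, b)
    (if a == b then (if a == s then lam else if a == t then lam^-1 else 1)
     else 0).

Definition fin_subgroup_Aut (G : seq 'M[R]_n) : Prop :=
  [/\ 1%:M \in G,
      (forall g h, g \in G -> h \in G -> g *m h \in G),
      (forall g, g \in G -> invmx g \in G) &
      (forall g, g \in G -> is_graut g)].

Definition gen_by_qr (G : seq 'M[R]_n) : Prop :=
  forall g, g \in G -> exists s : seq 'M[R]_n,
    (forall h, h \in s -> h \in G /\ (quasi_reflection h \/ quasi_reflection (invmx h)))
    /\ g = foldr (@mulmx R n n n) 1%:M s.

Fixpoint tau_chain (G : seq 'M[R]_n) (i j : 'I_n) (l : seq ('I_n * 'I_n * R)) : Prop :=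
  match l with
  | [::] => False
  | (a, b, lam) :: l' =>
      [/\ a = i, a != b, tau a b lam \in G &
          match l' with [::] => b = j | _ => tau_chain G b j l' end]
  end.

Definition is_circle (G : seq 'M[R]_n) : Prop :=
  forall i j : 'I_n, i != j -> exists l, tau_chain G i j l.

Definition Theta (G : seq 'M[R]_n) (i : 'I_n) : pred R :=
  fun lam => (lam != 0) && (theta i lam \in G).
Definition Tset (G : seq 'M[R]_n) (i j : 'I_n) : pred R :=
  fun lam => (lam != 0) && (tau i j lam \in G).
Definition Sset (G : seq 'M[R]_n) (i j : 'I_n) : pred R :=
  fun lam => (lam != 0) && (sdiag i j lam \in G).

Definition cyclic_of_order (P : pred R) (a : nat) : Prop :=
  exists z : R, a.-primitive_root z /\ forall x, P x <-> exists m : nat, x = z ^+ m.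

End Defs.

(* Main.v *)
Require Import Defs.
From HB Require Import structures.
From mathcomp Require Import all_boot all_order all_algebra all_solvable.
Set Implicit Arguments. Unset Strict Implicit. Unset Printing Implicit Defensive.
Import Order.TTheory GRing.Theory Num.Theory.
Local Open Scope ring_scope.

Lemma pow_closed (F : fieldType) (P : pred F) x m :
  P 1 -> (forall x y, P x -> P y -> P (x*y)) -> P x -> P (x ^+ m).
Proof.
move=> P1 PM Px; elim: m => [|m IH]; first by rewrite expr0.
by rewrite exprS; apply: PM.
Qed.

Lemma fin_cyclic (F : fieldType) (P : pred F) (s0 : seq F) :
  P 1 -> (forall x y, P x -> P y -> P (x*y)) -> (forall x, P x -> x != 0) ->
  (forall x, P x -> x \in s0) ->
  exists N, [/\ (0 < N)%N, cyclic_of_order P N & forall x, P x -> x ^+ N = 1].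
Proof.
move=> P1 PM P0 Ps0.
pose s := undup (filter P s0).
have Us : uniq s by apply: undup_uniq.
have ms x : (x \in s) = P x.
  rewrite mem_undup mem_filter; case Px: (P x) => //=; exact: Ps0.
pose N := size s.
have N1 x : P x -> x ^+ N = 1.
  move=> Px.
  have Um : uniq (map (fun y => x * y) s).
    by rewrite map_inj_uniq //; apply: mulfI; apply: P0.
  have sub : {subset map (fun y => x * y) s <= s}.
    by move=> y /mapP [w ws ->]; rewrite ms; apply: PM => //; rewrite -ms.
  have [_ eqs] := uniq_min_size Um sub (eq_leq (esym (size_map _ _))).
  have pe : perm_eq (map (fun y => x * y) s) s.
    by apply: uniq_perm => //.
  have := perm_big _ pe : \prod_(y <- map (fun y => x * y) s) y = \prod_(y <- s) y.
  rewrite big_map.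
  have -> : \big[*%R/1]_(i <- s) (x * i) = x ^+ N * \prod_(i <- s) i.
    rewrite big_split /= ; congr (_ * _).
    by rewrite (big_const_seq 1 (fun a b => a * b)) count_predT /N; elim: (size s) => //= m IH; rewrite exprS IH.
  have nz : \prod_(i <- s) i != 0.
    by rewrite prodf_seq_neq0; apply/allP => y; rewrite ms => /P0 ->.
  move/(congr1 (fun t => t / \prod_(i <- s) i)).
  by rewrite mulfK // divff.
have N0 : (0 < N)%N by rewrite /N -has_predT; apply/hasP; exists 1; rewrite ?ms.
exists N; split => //.
have := @has_prim_root F N s N0.
case/(_ _ Us (leqnn _))/hasP.
  by apply/allP => y; rewrite ms => /N1 /eqP; rewrite unity_rootE.
move=> z zs zprim; exists z; split => // x; split.
  by move=> /N1 /(prim_rootP zprim) [i ->]; exists i.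
by case=> m ->; apply: pow_closed => //; rewrite -ms.
Qed.
Section Mono.
Variable F : fieldType.
Variable n : nat.
Implicit Types (i j s t : 'I_n) (lam x y : F).

Definition mono (f : 'I_n -> 'I_n) (c : 'I_n -> F) : 'M[F]_n :=
  \matrix_(a, b) (if a == f b then c b else 0).

Lemma mono_mul f1 c1 f2 c2 :
  mono f1 c1 *m mono f2 c2 = mono (fun b => f1 (f2 b)) (fun b => c1 (f2 b) * c2 b).
Proof.
apply/matrixP => a b; rewrite !mxE (bigD1 (f2 b)) //= big1.
  by rewrite !mxE eqxx addr0; case: ifP; rewrite ?mul0r.
by move=> x /negbTE xb; rewrite !mxE xb mulr0.
Qed.

Lemma mono_eq f c f' c' : f =1 f' -> c =1 c' -> mono f c = mono f' c'.
Proof. by move=> ef ec; apply/matrixP => a b; rewrite !mxE ef ec. Qed.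

Definition swp s t b : 'I_n := if b == s then t else if b == t then s else b.

Lemma thetaE s lam : theta s lam = mono id (fun b => if b == s then lam else 1).
Proof. by apply/matrixP => a b; rewrite !mxE; case: eqP => // ->. Qed.

Lemma sdiagE s t lam : sdiag s t lam =
  mono id (fun b => if b == s then lam else if b == t then lam^-1 else 1).
Proof. by apply/matrixP => a b; rewrite !mxE; case: eqP => // ->. Qed.

Lemma tauE s t lam : tau s t lam =
  mono (swp s t) (fun b => if b == s then lam else if b == t then - lam^-1 else 1).
Proof.
apply/matrixP => a b; rewrite !mxE /swp.
case: (b =P s) => // _; case: (b =P t) => // _.
by case: (a =P b).
Qed.

Lemma neqF (x y : 'I_n) : x != y -> (x == y) = false.
Proof. exact: negbTE. Qed.
Lemma neqF' (x y : 'I_n) : x != y -> (y == x) = false.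
Proof. by rewrite eq_sym; exact: negbTE. Qed.

Ltac simp_eq := rewrite /swp; repeat (rewrite eqxx /= ||
  match goal with
  | H : is_true (?x != ?y) |- context [?x == ?y] => rewrite (neqF H) /=
  | H : is_true (?x != ?y) |- context [?y == ?x] => rewrite (neqF' H) /=
  end).

Ltac fsimp := rewrite ?(invr1, invrN, mulr1, mul1r, mulrN1, mulN1r, mulrN, mulNr, opprK, invrK) //; rewrite ?(mulVf, mulfV) //.

Lemma id1 i j lam : i != j ->
  theta j lam = tau i j 1 *m theta i lam *m (tau i j 1 *m (tau i j 1 *m tau i j 1)).
Proof.
move=> ij; rewrite !thetaE !tauE !mono_mul; apply: mono_eq => b;
case: (eqVneq b i) => [->|bi]; try (case: (eqVneq b j) => [->|bj]); simp_eq; fsimp.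
Qed.

Lemma id2 i j lam : i != j ->
  sdiag j i lam = tau i j 1 *m sdiag i j lam *m (tau i j 1 *m (tau i j 1 *m tau i j 1)).
Proof.
move=> ij; rewrite !sdiagE !tauE !mono_mul; apply: mono_eq => b;
case: (eqVneq b i) => [->|bi]; try (case: (eqVneq b j) => [->|bj]); simp_eq; fsimp.
Qed.

Lemma id3 i j l lam : i != j -> l != i -> l != j ->
  sdiag i l lam = tau j l 1 *m sdiag i j lam *m (tau j l 1 *m (tau j l 1 *m tau j l 1)).
Proof.
move=> ij li lj; rewrite !sdiagE !tauE !mono_mul; apply: mono_eq => b;
case: (eqVneq b i) => [->|bi]; try (case: (eqVneq b j) => [->|bj]);
  try (case: (eqVneq b l) => [->|bl]); simp_eq; fsimp.
Qed.

Lemma id4 i j lam : i != j -> lam != 0 ->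
  sdiag j i lam = tau i j lam *m (tau i j 1 *m (tau i j 1 *m tau i j 1)).
Proof.
move=> ij l0; rewrite !sdiagE !tauE !mono_mul; apply: mono_eq => b;
case: (eqVneq b i) => [->|bi]; try (case: (eqVneq b j) => [->|bj]); simp_eq; fsimp.
Qed.

Lemma id5 i j lam : i != j -> lam != 0 ->
  tau i j lam = sdiag j i lam *m tau i j 1.
Proof.
move=> ij l0; rewrite !sdiagE !tauE !mono_mul; apply: mono_eq => b;
case: (eqVneq b i) => [->|bi]; try (case: (eqVneq b j) => [->|bj]); simp_eq; fsimp.
Qed.

Lemma id6 i j : i != j -> sdiag i j (-1 : F) = tau i j 1 *m tau i j 1.
Proof.
move=> ij; rewrite !sdiagE !tauE !mono_mul; apply: mono_eq => b;
case: (eqVneq b i) => [->|bi]; try (case: (eqVneq b j) => [->|bj]); simp_eq; fsimp.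
Qed.

Lemma id7 i j lam : i != j -> sdiag i j lam = theta i lam *m theta j lam^-1.
Proof.
move=> ij; rewrite !sdiagE !thetaE !mono_mul; apply: mono_eq => b;
case: (eqVneq b i) => [->|bi]; try (case: (eqVneq b j) => [->|bj]); simp_eq; fsimp.
Qed.

Lemma theta1 i : theta i (1 : F) = 1%:M.
Proof. by apply/matrixP => a b; rewrite !mxE; case: eqP => // ->; case: ifP. Qed.

Lemma sdiag1 i j : sdiag i j (1 : F) = 1%:M.
Proof. by apply/matrixP => a b; rewrite !mxE invr1; case: eqP => // ->; case: ifP => //; case: ifP. Qed.

Lemma thetaM i x y : theta i x *m theta i y = theta i (x * y).
Proof.
rewrite !thetaE !mono_mul; apply: mono_eq => // b; case: ifP => //; by rewrite mulr1.
Qed.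

Lemma sdiagM i j x y : sdiag i j x *m sdiag i j y = sdiag i j (x * y).
Proof.
rewrite !sdiagE !mono_mul; apply: mono_eq => // b; case: ifP => //; case: ifP; by rewrite ?mulr1 // invfM mulrC.
Qed.

Lemma theta_ii i x : theta i x i i = x.
Proof. by rewrite !mxE !eqxx. Qed.

Lemma sdiag_ii i j x : sdiag i j x i i = x.
Proof. by rewrite !mxE !eqxx. Qed.

End Mono.

Lemma cyc_eq (F : fieldType) (P Q : pred F) a :
  P =1 Q -> cyclic_of_order P a -> cyclic_of_order Q a.
Proof.
move=> PQ [z [zp H]]; exists z; split => // x; rewrite -PQ; exact: H.
Qed.

Lemma neg1_neq1 (k : fieldType) : [pchar k] =i pred0 -> (-1 : k) != 1.
Proof.
move=> hchar; apply/eqP => e.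
have := hchar 2%N; rewrite !inE /=.
have -> : (2%:R : k) = 0 by rewrite mulr2n -{1}e addNr.
by rewrite eqxx.
Qed.

Theorem lemma4p2 (k : closedFieldType) (hchar : [pchar k] =i pred0)
  (n : nat) (hn : (2 <= n)%N) (G : seq 'M[k]_n)
  (hG : fin_subgroup_Aut G) (hgen : gen_by_qr G) (hcirc : is_circle G)
  (htau1 : forall i j : 'I_n, i != j -> tau i j 1 \in G) :
  [/\ (forall i j : 'I_n, Theta G i =1 Theta G j),
      (forall i j i' j' : 'I_n, i != j -> i' != j' -> Sset G i j =1 Sset G i' j'),
      (forall i j i' j' : 'I_n, i != j -> i' != j' ->
          Tset G i j =1 Tset G i' j' /\ Tset G i j =1 Sset G i j) &
      exists alpha beta : nat,
        [/\ forall i : 'I_n, cyclic_of_order (Theta G i) alpha,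
            forall i j : 'I_n, i != j -> cyclic_of_order (Sset G i j) beta,
            ~~ odd beta &
            (alpha %| beta)%N]].
Proof.
case: hG => G1 GM GV _.
have T3 i j : i != j -> tau i j 1 *m (tau i j 1 *m tau i j 1) \in G.
  by move=> ij; rewrite !GM ?htau1.
have ThS i j x : Theta G i x -> Theta G j x.
  case: (eqVneq i j) => [-> //|ij] /andP [x0 Gx]; apply/andP; split => //.
  by rewrite (id1 x ij) !GM ?htau1 ?T3.
have ThE i j : Theta G i =1 Theta G j by move=> x; apply/idP/idP; apply: ThS.
have Sswap i j x : i != j -> Sset G i j x -> Sset G j i x.
  move=> ij /andP [x0 Gx]; apply/andP; split => //.
  by rewrite (id2 x ij) !GM ?htau1 ?T3.
have Sright i j l x : i != j -> l != i -> Sset G i j x -> Sset G i l x.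
  move=> ij li; case: (eqVneq l j) => [-> //|lj] /andP [x0 Gx]; apply/andP; split => //.
  have jl : j != l by rewrite eq_sym.
  by rewrite (id3 x ij li lj) !GM ?htau1 ?T3.
have Smove i j i' j' x : i != j -> i' != j' -> Sset G i j x -> Sset G i' j' x.
  move=> ij ij' H; case: (eqVneq i' i) => [ei | i'i].
    rewrite ei; rewrite ei in ij'; apply: (Sright _ _ _ _ ij _ H); by rewrite eq_sym.
  have ii' : i != i' by rewrite eq_sym.
  have H1 := Sright _ _ _ _ ij i'i H.
  have H2 := Sswap _ _ _ ii' H1.
  by apply: Sright H2; rewrite // eq_sym.
have TS i j x : i != j -> Tset G i j x = Sset G i j x.
  move=> ij; have ji : j != i by rewrite eq_sym.
  apply/idP/idP => /andP [x0 Gx].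
    apply: (Smove j i) => //; apply/andP; split => //.
    by rewrite (id4 ij x0) GM ?T3.
  have : Sset G j i x by apply: (Smove i j) => //; apply/andP.
  case/andP => _ Gy; apply/andP; split => //.
  by rewrite (id5 ij x0) GM ?htau1.
have SE i j i' j' : i != j -> i' != j' -> Sset G i j =1 Sset G i' j'.
  by move=> ij ij' x; apply/idP/idP; apply: Smove.
pose i0 : 'I_n := Ordinal (leq_trans (isT : (0 < 2)%N) hn).
pose j0 : 'I_n := Ordinal (leq_trans (isT : (1 < 2)%N) hn).
have ij0 : i0 != j0 by [].
have [alpha [a0 ca Na]] : exists N, [/\ (0 < N)%N, cyclic_of_order (Theta G i0) N &
    forall x, Theta G i0 x -> x ^+ N = 1].
  apply: (@fin_cyclic k _ [seq (g : 'M[k]_n) i0 i0 | g <- G]).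
  - by apply/andP; rewrite oner_neq0 theta1.
  - move=> x y /andP [x0 Gx] /andP [y0 Gy]; apply/andP; split; first by rewrite mulf_neq0.
    by rewrite -thetaM GM.
  - by move=> x /andP [].
  - by move=> x /andP [_ Gx]; apply/mapP; exists (theta i0 x); rewrite ?theta_ii.
have [beta [b0 cb Nb]] : exists N, [/\ (0 < N)%N, cyclic_of_order (Sset G i0 j0) N &
    forall x, Sset G i0 j0 x -> x ^+ N = 1].
  apply: (@fin_cyclic k _ [seq (g : 'M[k]_n) i0 i0 | g <- G]).
  - by apply/andP; rewrite oner_neq0 sdiag1.
  - move=> x y /andP [x0 Gx] /andP [y0 Gy]; apply/andP; split; first by rewrite mulf_neq0.
    by rewrite -sdiagM GM.
  - by move=> x /andP [].
  - by move=> x /andP [_ Gx]; apply/mapP; exists (sdiag i0 j0 x); rewrite ?sdiag_ii.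
split => //.
  move=> i j i' j' ij ij'; split => x; last exact: TS.
  by rewrite !TS //; apply: SE.
exists alpha, beta; split.
- by move=> i; apply: cyc_eq ca => x; apply: ThE.
- by move=> i j ij; apply: cyc_eq cb => x; apply: SE.
- apply/negP => ob; case: cb => z [zp Hz].
  have Sm1 : Sset G i0 j0 (-1).
    by apply/andP; rewrite oppr_eq0 oner_neq0 (id6 _ ij0) GM ?htau1.
  have [m em] := (Hz (-1)).1 Sm1.
  have : (-1 : k) ^+ beta = 1 by rewrite em -exprM mulnC exprM (prim_expr_order zp) expr1n.
  by rewrite -signr_odd ob expr1 => /eqP; rewrite (negbTE (neg1_neq1 hchar)).
- case: ca => z [zp Hz].
  have Tz : Theta G i0 z by apply/(Hz z).2; exists 1%N; rewrite expr1.
  have Sz : Sset G i0 j0 z.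
    case/andP: (Tz) => z0 Gz; apply/andP; split => //.
    have Tzi : Theta G j0 z^-1.
      rewrite -(ThE i0 j0 z^-1).
      have -> : z^-1 = z ^+ alpha.-1.
        apply: (mulfI z0); rewrite mulfV // -exprS prednK //; exact/esym/Na.
      apply: pow_closed => //.
        by apply/andP; rewrite oner_neq0 theta1.
      move=> x y /andP [x0 Gx] /andP [y0 Gy]; apply/andP; split; first by rewrite mulf_neq0.
      by rewrite -thetaM GM.
    case/andP: Tzi => _ Gzi.
    by rewrite (id7 z ij0) GM.
  by rewrite (prim_order_dvd zp) Nb.
Qed.
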